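(* Let $M$ be a complete pointed metric space. Then $\delta(M)=\{\delta(x):x\in M\}$ is a weakly closed subset of $\mathcal F(M)$.
   Context: A pointed metric space $M$ has a distinguished origin $0$. $\mathrm{Lip}_0(M)$ is the Banach space of real Lipschitz functions on $M$ vanishing at $0$ with the best Lipschitz constant as norm; $\delta(x)\in\mathrm{Lip}_0(M)^*$ is evaluation at $x$, and the Lipschitz free space $\mathcal F(M)$ is the closed linear span of $\delta(M)$ in $\mathrm{Lip}_0(M)^*$, with $\mathcal F(M)^*=\mathrm{Lip}_0(M)$. ''Weakly'' refers to the weak topology $\sigma(\mathcal F(M),\mathrm{Lip}_0(M))$. *)

(* Defs.v *)
From Stdlib Require Import Reals List.
Open Scope R_scope.

Record is_metric (M : Type) (d : M -> M -> R) : Prop := {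
  metric_eq0 : forall x y, d x y = 0 <-> x = y;
  metric_sym : forall x y, d x y = d y x;
  metric_triangle : forall x y z, d x z <= d x y + d y z
}.

Definition cauchy_seq {M : Type} (d : M -> M -> R) (u : nat -> M) : Prop :=
  forall eps, 0 < eps -> exists N, forall m n, (N <= m)%nat -> (N <= n)%nat ->
    d (u m) (u n) < eps.

Definition converges_to {M : Type} (d : M -> M -> R) (u : nat -> M) (l : M) : Prop :=
  forall eps, 0 < eps -> exists N, forall n, (N <= n)%nat -> d (u n) l < eps.

Definition complete_metric {M : Type} (d : M -> M -> R) : Prop :=
  forall u, cauchy_seq d u -> exists l, converges_to d u l.

Definition lip0 {M : Type} (d : M -> M -> R) (o : M) (f : M -> R) : Prop :=
  f o = 0 /\ exists L, forall x y, Rabs (f x - f y) <= L * d x y.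

Definition lip0_ball {M : Type} (d : M -> M -> R) (o : M) (f : M -> R) : Prop :=
  f o = 0 /\ forall x y, Rabs (f x - f y) <= d x y.

(* A finitely supported molecule  sum_i a_i delta(x_i)  evaluated at f. *)
Definition eval_comb {M : Type} (l : list (R * M)) (f : M -> R) : R :=
  fold_right (fun p acc => fst p * f (snd p) + acc) 0 l.

(* An element of the dual of Lip_0(M) is represented by a functional phi on M -> R,
   of which only the values on Lip_0(M) matter; it must be linear there. *)
Definition lin_on_lip0 {M : Type} (d : M -> M -> R) (o : M)
    (phi : (M -> R) -> R) : Prop :=
  forall f g a, lip0 d o f -> lip0 d o g ->
    phi (fun x => f x + a * g x) = phi f + a * phi g.

(* F(M): the norm-closure in the dual of Lip_0(M) of span(delta(M)); i.e. linear
   functionals that are dual-norm limits of finite combinations of deltas. *)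
Definition in_free {M : Type} (d : M -> M -> R) (o : M) (phi : (M -> R) -> R) : Prop :=
  lin_on_lip0 d o phi /\
  forall eps, 0 < eps -> exists l : list (R * M),
    forall f, lip0_ball d o f -> Rabs (phi f - eval_comb l f) <= eps.

Definition in_delta_image {M : Type} (d : M -> M -> R) (o : M) (phi : (M -> R) -> R) : Prop :=
  exists x, forall f, lip0 d o f -> phi f = f x.

(* A subset C of F(M) is closed for sigma(F(M), Lip_0(M)): every point of
   F(M) outside C has a basic weak neighbourhood
   { psi in F(M) : |psi f_i - phi f_i| < eps, i } disjoint from C. *)
Definition weakly_closed_in_free {M : Type} (d : M -> M -> R) (o : M)
    (C : ((M -> R) -> R) -> Prop) : Prop :=
  forall phi, in_free d o phi -> ~ C phi ->
    exists (fs : list (M -> R)) (eps : R),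
      0 < eps /\ (forall f, In f fs -> lip0 d o f) /\
      forall psi, in_free d o psi ->
        (forall f, In f fs -> Rabs (psi f - phi f) < eps) -> ~ C psi.

(* Main.v *)
Require Import Defs.
From Stdlib Require Import Reals List Lra Lia Classical ClassicalEpsilon.
Open Scope R_scope.

Lemma Rabs_le_inv x a : Rabs x <= a -> -a <= x <= a.
Proof. unfold Rabs; destruct Rcase_abs; intros; lra. Qed.

Lemma le_eps (a b : R) : (forall eps, 0 < eps -> a <= b + eps) -> a <= b.
Proof.
  intros H. destruct (Rle_or_lt a b) as [h|h]; auto.
  specialize (H ((a-b)/2)). lra.
Qed.

Lemma d_nonneg M d (Hm : is_metric M d) x y : 0 <= d x y.
Proof.
  destruct Hm as [H0 Hs Ht].
  pose proof (Ht x y x). rewrite (Hs y x) in H. assert (d x x = 0) by (apply H0; auto). lra.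
Qed.

Lemma d_rev M d (Hm : is_metric M d) x y z : Rabs (d x z - d y z) <= d x y.
Proof.
  destruct Hm as [H0 Hs Ht].
  pose proof (Ht x y z) as A. pose proof (Ht y x z) as B. rewrite (Hs y x) in B.
  apply Rabs_le; lra.
Qed.

Definition gp {M} (d : M -> M -> R) (o p : M) : M -> R := fun z => d z p - d o p.

Lemma gp_lip0 M d (Hm : is_metric M d) o p : lip0 d o (gp d o p).
Proof.
  split. unfold gp; ring.
  exists 1. intros x y. unfold gp.
  replace (d x p - d o p - (d y p - d o p)) with (d x p - d y p) by ring.
  rewrite Rmult_1_l. apply d_rev; auto.
Qed.

Definition Dm {M} (d : M -> M -> R) (c : R) (S : list M) (x : M) : R :=
  fold_right (fun y acc => Rmin (d x y) acc) c S.

Lemma Rmin_lip a b a' b' e : Rabs (a - a') <= e -> Rabs (b - b') <= e ->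
  Rabs (Rmin a b - Rmin a' b') <= e.
Proof.
  intros H1 H2. apply Rabs_le. apply Rabs_le_inv in H1. apply Rabs_le_inv in H2.
  unfold Rmin; repeat destruct Rle_dec; lra.
Qed.

Lemma Dm_lip M d (Hm : is_metric M d) c S x z : Rabs (Dm d c S x - Dm d c S z) <= d x z.
Proof.
  induction S as [|y S IH]; simpl.
  - replace (c - c) with 0 by ring. rewrite Rabs_R0. apply d_nonneg; auto.
  - apply Rmin_lip; auto. apply d_rev; auto.
Qed.

Lemma Dm_le M (d : M -> M -> R) c S x y : In y S -> Dm d c S x <= d x y.
Proof.
  induction S as [|z S IH]; simpl; [tauto|].
  intros [<-|H]. apply Rmin_l. eapply Rle_trans. apply Rmin_r. auto.
Qed.

Lemma Dm_nonneg M d (Hm : is_metric M d) c S x : 0 <= c -> 0 <= Dm d c S x.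
Proof.
  intros Hc. induction S as [|z S IH]; simpl; auto.
  apply Rmin_glb; auto. apply d_nonneg; auto.
Qed.

Lemma Dm_cases M (d : M -> M -> R) c S x : Dm d c S x = c \/ exists y, In y S /\ Dm d c S x = d x y.
Proof.
  induction S as [|z S IH]; simpl; auto.
  unfold Rmin; destruct Rle_dec.
  - right. exists z. auto.
  - destruct IH as [H|[y [H1 H2]]]; auto. right. exists y; auto.
Qed.

Lemma eval_comb_zero M (l : list (R * M)) f :
  (forall y, In y (map snd l) -> f y = 0) -> eval_comb l f = 0.
Proof.
  induction l as [|[a y] l IH]; simpl; auto.
  intros H. rewrite IH by auto. rewrite H by auto. ring.
Qed.

Theorem proposition2p9 (M : Type) (d : M -> M -> R) (o : M)
  (Hmetric : is_metric M d) (Hcomplete : complete_metric d) :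
  weakly_closed_in_free d o (in_delta_image d o).
Proof.
  intros phi Hphi Hnd.
  apply NNPP; intro Hneg.
  assert (approx : forall fs eps, 0 < eps -> (forall f, In f fs -> lip0 d o f) ->
     exists x, forall f, In f fs -> Rabs (f x - phi f) < eps).
  { intros fs eps He Hfs. apply NNPP; intro Hno. apply Hneg.
    exists fs, eps. split; [auto|split; [auto|]].
    intros psi _ Hcl [x Hx]. apply Hno. exists x. intros f Hf.
    rewrite <- Hx by auto. auto. }
  set (h := fun p => phi (gp d o p) + d o p).
  assert (two : forall p q eps, 0 < eps -> exists x,
     Rabs (d x p - h p) < eps /\ Rabs (d x q - h q) < eps).
  { intros p q eps He.
    destruct (approx (gp d o p :: gp d o q :: nil) eps He) as [x Hx].
    { intros f [<-|[<-|[]]]; apply gp_lip0; auto. }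
    exists x. split.
    - pose proof (Hx _ (or_introl eq_refl)) as A. unfold h, gp in *. cbv beta in A.
      replace (d x p - (phi (fun z => d z p - d o p) + d o p)) with
        (d x p - d o p - phi (fun z => d z p - d o p)) by ring. exact A.
    - pose proof (Hx _ (or_intror (or_introl eq_refl))) as A. unfold h, gp in *. cbv beta in A.
      replace (d x q - (phi (fun z => d z q - d o q) + d o q)) with
        (d x q - d o q - phi (fun z => d z q - d o q)) by ring. exact A. }
  assert (hpos : forall p, 0 <= h p).
  { intros p. apply le_eps. intros eps He. destruct (two p p eps He) as [x [H1 _]].
    apply Rabs_def2 in H1. pose proof (d_nonneg _ _ Hmetric x p). lra. }
  assert (hlip : forall p q, h p <= h q + d p q).
  { intros p q. apply le_eps. intros eps He. destruct (two p q (eps/2)) as [x [H1 H2]]; [lra|].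
    apply Rabs_def2 in H1. apply Rabs_def2 in H2.
    destruct Hmetric as [_ Hs Ht]. pose proof (Ht x q p). rewrite (Hs q p) in H. lra. }
  assert (htri : forall p q, d p q <= h p + h q).
  { intros p q. apply le_eps. intros eps He. destruct (two p q (eps/2)) as [x [H1 H2]]; [lra|].
    apply Rabs_def2 in H1. apply Rabs_def2 in H2.
    destruct Hmetric as [_ Hs Ht]. pose proof (Ht p x q). rewrite (Hs p x) in H. lra. }
  assert (nozero : forall p, h p = 0 -> False).
  { intros p Hp. apply Hnd. exists p. intros f [Hfo [L HL]].
    assert (Habs : Rabs (phi f - f p) <= 0).
    { apply le_eps. intros eps He.
      set (e' := eps / (1 + Rabs L)).
      assert (He' : 0 < e').
      { unfold e'. apply Rdiv_lt_0_compat; auto. pose proof (Rabs_pos L); lra. }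
      destruct (approx (f :: gp d o p :: nil) e' He') as [x Hx].
      { intros g [<-|[<-|[]]]. split; eauto. apply gp_lip0; auto. }
      assert (A1 : Rabs (f x - phi f) < e') by (apply Hx; simpl; auto).
      assert (A2 : Rabs (gp d o p x - phi (gp d o p)) < e') by (apply Hx; simpl; auto).
      unfold gp at 1 in A2. unfold h in Hp.
      replace (d x p - d o p - phi (gp d o p)) with (d x p) in A2 by lra.
      pose proof (HL x p).
      pose proof (d_nonneg _ _ Hmetric x p).
      assert (L * d x p <= Rabs L * d x p).
      { apply Rmult_le_compat_r; auto. apply RRle_abs. }
      assert (Rabs L * d x p <= Rabs L * e').
      { apply Rmult_le_compat_l. apply Rabs_pos. apply Rabs_def2 in A2. lra. }
      assert (Hee : e' * (1 + Rabs L) = eps).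
      { unfold e'. field. pose proof (Rabs_pos L); lra. }
      replace (phi f - f p) with ((f x - f p) - (f x - phi f)) by ring.
      eapply Rle_trans. apply Rabs_triang. rewrite Rabs_Ropp.
      lra. }
    apply Rabs_le_inv in Habs. lra. }
  destruct (classic (exists r, 0 < r /\ forall p, r <= h p)) as [[r [Hr Hh]]|Hnot].
  -
    destruct Hphi as [Hlin Happ].
    destruct (Happ (r/8)) as [l Hl]; [lra|].
    set (S := o :: map snd l).
    set (f := Dm d (r/4) S).
    assert (Hfl : forall x y, Rabs (f x - f y) <= d x y) by (intros; apply Dm_lip; auto).
    assert (Hf0 : forall y, In y S -> f y = 0).
    { intros y Hy. apply Rle_antisym.
      - eapply Rle_trans. apply (Dm_le _ _ _ _ _ y Hy).
        destruct Hmetric as [H0 _ _]. right. apply H0; auto.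
      - apply Dm_nonneg; auto; lra. }
    assert (Hball : lip0_ball d o f) by (split; auto; apply Hf0; simpl; auto).
    assert (Hphif : Rabs (phi f) <= r/8).
    { pose proof (Hl f Hball). rewrite eval_comb_zero in H.
      rewrite Rminus_0_r in H; auto. intros y Hy; apply Hf0; simpl; auto. }
    destruct (approx (f :: map (gp d o) S) (r/8)) as [x Hx]; [lra| |].
    { intros g [<-|Hg]. split. apply Hf0; simpl; auto. exists 1. intros; rewrite Rmult_1_l; auto.
      apply in_map_iff in Hg. destruct Hg as [p [<- _]]. apply gp_lip0; auto. }
    assert (A1 : Rabs (f x - phi f) < r/8) by (apply Hx; simpl; auto).
    apply Rabs_def2 in A1. apply Rabs_le_inv in Hphif. 
    destruct (Dm_cases _ d (r/4) S x) as [Hc|[y [Hy Hd]]].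
    + fold f in Hc. destruct A1; destruct Hphif; lra.
    + fold f in Hd.
      assert (A2 : Rabs (gp d o y x - phi (gp d o y)) < r/8).
      { apply Hx. right. apply in_map; auto. }
      assert (E : gp d o y x - phi (gp d o y) = d x y - h y) by (unfold h, gp; ring).
      rewrite E in A2. apply Rabs_def2 in A2. destruct A2 as [A2 A3].
      destruct A1 as [A1 A4]. destruct Hphif. pose proof (Hh y). lra.
  -
    assert (Hn : forall n : nat, exists p, h p < / INR (S n)).
    { intros n. apply NNPP; intro Hc. apply Hnot. exists (/ INR (S n)). split.
      apply Rinv_0_lt_compat, lt_0_INR; lia.
      intros p. apply Rnot_lt_le. intro Hlt. apply Hc. exists p; auto. }
    set (u := fun n => proj1_sig (constructive_indefinite_description _ (Hn n))).
    assert (Hu : forall n, h (u n) < / INR (S n)).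
    { intros n. unfold u. destruct constructive_indefinite_description; simpl; auto. }
    assert (Hmono : forall N n, (0 < N)%nat -> (N <= n)%nat -> / INR (S n) <= / INR N).
    { intros N n HN Hle. apply Rinv_le_contravar. apply lt_0_INR; auto.
      apply le_INR; lia. }
    destruct (Hcomplete u) as [lim Hlim].
    { intros eps He. destruct (archimed_cor1 (eps/2)) as [N [HN1 HN2]]; [lra|].
      exists N. intros m n Hm Hn'. pose proof (htri (u m) (u n)).
      pose proof (Hu m). pose proof (Hu n). pose proof (Hmono N m HN2 Hm).
      pose proof (Hmono N n HN2 Hn'). lra. }
    apply (nozero lim). apply Rle_antisym; auto.
    replace 0 with (0 + 0) by ring. apply le_eps. intros eps He.
    destruct (archimed_cor1 (eps/2)) as [N [HN1 HN2]]; [lra|].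
    destruct (Hlim (eps/2)) as [K HK]; [lra|].
    set (n := Nat.max N K).
    pose proof (HK n (Nat.le_max_r _ _)).
    pose proof (Hmono N n HN2 (Nat.le_max_l _ _)).
    pose proof (Hu n). pose proof (hlip lim (u n)).
    destruct Hmetric as [_ Hs _]. rewrite (Hs lim (u n)) in H2. lra.
Qed.
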